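(* Let $G$ be a graph, let $X,Y$ be disjoint subsets of $V(G)$, and let $K_1,K_2$ be two minimal $X-Y$ separators. Let $K_1^t=K_1 \cap NR(G,Y,K_2)$, $K_1^b=(K_1 \setminus K_1^t) \setminus (K_1 \cap K_2)$, $K_2^t=K_2 \cap NR(G,Y,K_1)$, $K_2^b=(K_2 \setminus K_2^t) \setminus (K_1 \cap K_2)$, and let $Top(K_1,K_2)=K_1^t \cup K_2^t \cup (K_1 \cap K_2)$ and $Bottom(K_1,K_2)=K_1^b \cup K_2^b \cup (K_1 \cap K_2)$. Then both $Top(K_1,K_2)$ and $Bottom(K_1,K_2)$ are $X-Y$ separators. Moreover, $Bottom(K_1,K_2) \geq K_1$ and $Bottom(K_1,K_2) \geq K_2$.
   Context: $G$ is a finite undirected graph. For disjoint $X,Y \subseteq V(G)$, an $X-Y$ separator is a set $K \subseteq V(G) \setminus (X \cup Y)$ such that $G \setminus K$ (the subgraph induced by $V(G)\setminus K$) contains no path from a vertex of $X$ to a vertex of $Y$; it is minimal if it is minimal under inclusion. For disjoint $A,B \subseteq V(G)$, $NR(G,A,B)$ denotes the set of vertices of $G$ that are not reachable from $A$ in $G \setminus B$. For $X-Y$ separators $K,K'$, we write $K \geq K'$ if $NR(G,Y,K) \supseteq NR(G,Y,K')$. *)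

(* Defs.v *)
From mathcomp Require Import all_boot.
Set Implicit Arguments. Unset Strict Implicit. Unset Printing Implicit Defensive.

Definition undirected (T : finType) (e : rel T) := symmetric e.

Definition del_rel (T : finType) (e : rel T) (B : {set T}) : rel T :=
  [rel u v | [&& e u v, u \notin B & v \notin B]].

Definition reach (T : finType) (e : rel T) (B : {set T}) (a v : T) : bool :=
  [&& a \notin B, v \notin B & connect (del_rel e B) a v].

Definition NR (T : finType) (e : rel T) (A B : {set T}) : {set T} :=
  [set v | ~~ [exists a in A, reach e B a v]].

Definition separator (T : finType) (e : rel T) (X Y K : {set T}) : Prop :=
  [disjoint K & X :|: Y] /\
  forall x y, x \in X -> y \in Y -> ~~ reach e K x y.

Definition minimal_separator (T : finType) (e : rel T) (X Y K : {set T}) : Prop :=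
  separator e X Y K /\ forall K' : {set T}, K' \proper K -> ~ separator e X Y K'.

Definition sep_ge (T : finType) (e : rel T) (Y K K' : {set T}) : Prop :=
  NR e Y K' \subset NR e Y K.

Definition K_top (T : finType) (e : rel T) (Y K1 K2 : {set T}) := K1 :&: NR e Y K2.
Definition K_bot (T : finType) (e : rel T) (Y K1 K2 : {set T}) :=
  (K1 :\: K_top e Y K1 K2) :\: (K1 :&: K2).

Definition Top (T : finType) (e : rel T) (Y K1 K2 : {set T}) :=
  K_top e Y K1 K2 :|: K_top e Y K2 K1 :|: (K1 :&: K2).
Definition Bottom (T : finType) (e : rel T) (Y K1 K2 : {set T}) :=
  K_bot e Y K1 K2 :|: K_bot e Y K2 K1 :|: (K1 :&: K2).

(* Main.v *)
Require Import Defs.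
From mathcomp Require Import all_boot.
Set Implicit Arguments. Unset Strict Implicit.

Lemma del_mono (T : finType) (e : rel T) (B B' : {set T}) a v :
  B \subset B' -> connect (del_rel e B') a v -> connect (del_rel e B) a v.
Proof.
move=> sBB'; apply: connect_sub => x y; rewrite /del_rel /= => /and3P [exy xB yB].
apply: connect1; rewrite /= exy.
by rewrite (contra (subsetP sBB' x)) // (contra (subsetP sBB' y)).
Qed.

Lemma del_sym (T : finType) (e : rel T) (B : {set T}) a v :
  symmetric e -> connect (del_rel e B) a v = connect (del_rel e B) v a.
Proof.
move=> He; apply: sym_connect_sym => x y; rewrite /del_rel /= He.
by congr andb; rewrite andbC.
Qed.

Lemma first_hit_p (T : finType) (e : rel T) (B C : {set T}) p : forall a,
  path (del_rel e B) a p -> a \notin B -> a \notin C ->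
  (connect (del_rel e (B :|: C)) a (last a p) /\ last a p \notin C) \/
  exists w u, [/\ w \in C, w \notin B, connect (del_rel e (B :|: C)) a u,
                  u \notin B :|: C & e u w].
Proof.
elim: p => [|z p IH] a /=.
  by move=> _ aB aC; left; rewrite connect0.
move=> /andP [H pp] aB aC; move: H; rewrite /del_rel /= => /and3P [eaz _ zB].
have aBC : a \notin B :|: C by rewrite inE negb_or aB aC.
case zC: (z \in C).
  by right; exists z, a; split=> //; rewrite connect0.
have zBC : z \notin B :|: C by rewrite inE negb_or zB zC.
have eaz' : connect (del_rel e (B :|: C)) a z.
  by apply: connect1; rewrite /del_rel /= eaz aBC zBC.
case: (IH z pp zB (negbT zC)) => [[c lC] | [w [u [wC wB cu uBC euw]]]].
  by left; split=> //; apply: connect_trans _ eaz' c.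
by right; exists w, u; split=> //; apply: connect_trans _ eaz' cu.
Qed.

Lemma first_hit (T : finType) (e : rel T) (B C : {set T}) a v :
  connect (del_rel e B) a v -> a \notin B -> a \notin C ->
  (connect (del_rel e (B :|: C)) a v /\ v \notin C) \/
  exists w u, [/\ w \in C, w \notin B, connect (del_rel e (B :|: C)) a u,
                  u \notin B :|: C & e u w].
Proof. by case/connectP => p pp ->; apply: first_hit_p. Qed.

Lemma link (T : finType) (e : rel T) (K B C : {set T}) a u w :
  K \subset C -> connect (del_rel e (B :|: C)) a u -> u \notin B :|: C ->
  e u w -> w \notin K -> a \notin K -> reach e K a w.
Proof.
move=> sKC cu uBC euw wK aK; rewrite /reach aK wK /=.
have sK : K \subset B :|: C by apply: subset_trans sKC (subsetUr _ _).
have uK : u \notin K by apply: contra (subsetP sK u) uBC.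
have c1 : connect (del_rel e K) u w by apply: connect1; rewrite /del_rel /= euw uK wK.
exact: connect_trans _ (del_mono sK cu) c1.
Qed.

Lemma reach_comb (T : finType) (e : rel T) (K : {set T}) x y w :
  symmetric e -> reach e K x w -> reach e K y w -> reach e K x y.
Proof.
move=> He /and3P [xK wK cxw] /and3P [yK _ cyw]; rewrite /reach xK yK /=.
by apply: connect_trans _ cxw _; rewrite del_sym.
Qed.

Lemma top_aux (T : finType) (e : rel T) (X Y K1 K2 : {set T}) x w :
  symmetric e -> (forall x y, x \in X -> y \in Y -> ~~ reach e K2 x y) ->
  x \in X -> reach e K2 x w -> w \in K1 -> w \notin K1 :&: NR e Y K2 -> False.
Proof.
move=> He s2 xX rxw wK1; rewrite inE wK1 /= /NR inE negbK.
case/existsP => y /andP [yY ryw].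
by move: (s2 x y xX yY); rewrite (reach_comb He rxw ryw).
Qed.

Lemma bot_aux (T : finType) (e : rel T) (Y K1 K2 : {set T}) y w :
  y \in Y -> reach e K2 y w -> w \in K1 -> w \in K_bot e Y K1 K2.
Proof.
move=> yY /and3P [yK wK cyw] wK1.
rewrite /K_bot /K_top !inE wK1 (negbTE wK) /=.
by rewrite andbT negbK; apply/existsP; exists y; rewrite yY /reach yK wK.
Qed.

Lemma notK (T : finType) (X Y K : {set T}) x :
  [disjoint K & X :|: Y] -> x \in X :|: Y -> x \notin K.
Proof. by move=> d h; rewrite (disjointFl d h). Qed.

Theorem proposition2 (T : finType) (e : rel T) (X Y K1 K2 : {set T}) :
  undirected e ->
  [disjoint X & Y] ->
  minimal_separator e X Y K1 ->
  minimal_separator e X Y K2 ->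
  [/\ separator e X Y (Top e Y K1 K2),
      separator e X Y (Bottom e Y K1 K2),
      sep_ge e Y (Bottom e Y K1 K2) K1
    & sep_ge e Y (Bottom e Y K1 K2) K2].
Proof.
move=> He dXY [[dK1 s1] _] [[dK2 s2] _].
have xK1 x : x \in X -> x \notin K1 by move=> h; apply: notK dK1 _; rewrite inE h.
have xK2 x : x \in X -> x \notin K2 by move=> h; apply: notK dK2 _; rewrite inE h.
have yK1 x : x \in Y -> x \notin K1 by move=> h; apply: notK dK1 _; rewrite inE h orbT.
have yK2 x : x \in Y -> x \notin K2 by move=> h; apply: notK dK2 _; rewrite inE h orbT.
have notC x : x \notin K1 -> x \notin K2 -> x \notin K1 :|: K2.
  by move=> a b; rewrite inE negb_or a b.
have botkey B y w u : y \in Y -> w \in K1 :|: K2 ->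
    connect (del_rel e (B :|: (K1 :|: K2))) y u -> u \notin B :|: (K1 :|: K2) ->
    e u w -> w \in Bottom e Y K1 K2.
  move=> yY wC cu uBC euw; rewrite /Bottom.
  case K12: (w \in K1 :&: K2); first by rewrite inE K12 orbT.
  move: K12; rewrite inE; case/setUP: wC => wK; rewrite wK /= => /negbT wK'.
    rewrite inE; apply/orP; left; rewrite inE; apply/orP; left.
    apply: bot_aux (yY) _ wK.
    by apply: (link (subsetUr _ _) cu uBC euw) => //; exact: yK2.
  move: wK'; rewrite ?andbT => wK'.
  rewrite inE; apply/orP; left; rewrite inE; apply/orP; right.
  apply: bot_aux (yY) _ wK.
  by apply: (link (subsetUl _ _) cu uBC euw) => //; exact: yK1.
have disj (S : {set T}) : S \subset K1 :|: K2 -> [disjoint S & X :|: Y].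
  move=> sS; apply/pred0P => z /=; apply/negbTE; apply/andP => [[zS zXY]].
  case/setUP: (subsetP sS z zS) => zK.
    by move: (disjointFl dK1 zXY); rewrite zK.
  by move: (disjointFl dK2 zXY); rewrite zK.
have sepBot : separator e X Y (Bottom e Y K1 K2).
  split.
    apply: disj; apply/subsetP => z; rewrite /Bottom /K_bot !inE.
    by case: (z \in K1); case: (z \in K2); rewrite ?orbT ?andbF.
  move=> x y xX yY; apply/negP => /and3P [xB yB cxy].
  rewrite del_sym // in cxy.
  case: (first_hit (C := K1 :|: K2) cxy yB (notC _ (yK1 _ yY) (yK2 _ yY))).
    move=> [c _]; move: (s1 x y xX yY); rewrite /reach (xK1 _ xX) (yK1 _ yY) /=.
    rewrite del_sym //; have -> // : connect (del_rel e K1) y x.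
    by apply: del_mono c; apply: subset_trans (subsetUl _ _) (subsetUr _ _).
  move=> [w [u [wC wB cu uBC euw]]].
  by move: wB; rewrite (botkey _ y w u yY wC cu uBC euw).
have sepTop : separator e X Y (Top e Y K1 K2).
  split.
    apply: disj; apply/subsetP => z; rewrite /Top /K_top !inE.
    by case: (z \in K1); case: (z \in K2); rewrite ?orbT ?andbF.
  move=> x y xX yY; apply/negP => /and3P [xB yB cxy].
  case: (first_hit (C := K1 :|: K2) cxy xB (notC _ (xK1 _ xX) (xK2 _ xX))).
    move=> [c _]; move: (s1 x y xX yY); rewrite /reach (xK1 _ xX) (yK1 _ yY) /=.
    have -> // : connect (del_rel e K1) x y.
    by apply: del_mono c; apply: subset_trans (subsetUl _ _) (subsetUr _ _).
  move=> [w [u [wC wB cu uBC euw]]].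
  move: wB; rewrite /Top !in_setU !negb_or => /andP [/andP [t1 t2] t12].
  case/setUP: wC => wK.
    have wK2 : w \notin K2 by move: t12; rewrite inE wK.
    have r : reach e K2 x w.
      by apply: (link (subsetUr _ _) cu uBC euw) => //; exact: xK2.
    exact: (top_aux He s2 xX r wK t1).
  have wK1 : w \notin K1 by move: t12; rewrite inE wK andbT.
  have r : reach e K1 x w.
    by apply: (link (subsetUl _ _) cu uBC euw) => //; exact: xK1.
  exact: (top_aux He s1 xX r wK t2).
split=> //.
  apply/subsetP => v; rewrite /NR !inE; apply: contra.
  case/existsP => y /andP [yY /and3P [yB vB c]]; apply/existsP; exists y.
  rewrite yY /reach (yK1 _ yY) /=.
  case: (first_hit (C := K1 :|: K2) c yB (notC _ (yK1 _ yY) (yK2 _ yY))).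
    move=> [c' vC]; apply/andP; split.
      by move: vC; rewrite inE negb_or => /andP [].
    by apply: del_mono c'; apply: subset_trans (subsetUl _ _) (subsetUr _ _).
  move=> [w [u [wC wB cu uBC euw]]].
  by move: wB; rewrite (botkey _ y w u yY wC cu uBC euw).
apply/subsetP => v; rewrite /NR !inE; apply: contra.
case/existsP => y /andP [yY /and3P [yB vB c]]; apply/existsP; exists y.
rewrite yY /reach (yK2 _ yY) /=.
case: (first_hit (C := K1 :|: K2) c yB (notC _ (yK1 _ yY) (yK2 _ yY))).
  move=> [c' vC]; apply/andP; split.
    by move: vC; rewrite inE negb_or => /andP [].
  by apply: del_mono c'; apply: subset_trans (subsetUr _ _) (subsetUr _ _).
move=> [w [u [wC wB cu uBC euw]]].
by move: wB; rewrite (botkey _ y w u yY wC cu uBC euw).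
Qed.
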